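(* Let $\Phi=\forall u_1\ldots\forall u_n\exists e_1(D_1)\ldots\exists e_m(D_m).\varphi$ be a DQBF with existential variables $E$, and let $<_E$ be a linear ordering of $E$. Then $\Phi$ is true if and only if for each $e\in E$ there is a propositional formula $\psi_e$ with $\mathit{var}(\psi_e)\subseteq D(e)\cup\{x\in E\mid D(x)\subseteq D(e),\ x<_E e\}$ such that $\neg\varphi\wedge\bigwedge_{e\in E}(e\leftrightarrow\psi_e)$ is unsatisfiable.
   Context: For a set $V$ of variables, $[V]$ is the set of all assignments $V\to\{\textsc{true},\textsc{false}\}$, and $\sigma|_W$ denotes restriction. A DQBF in prenex CNF is $\Phi=\forall u_1\ldots\forall u_n\exists e_1(D_1)\ldots\exists e_m(D_m).\varphi$ where all $u_i,e_j$ are pairwise distinct variables, $U=\{u_1,\dots,u_n\}$, $E=\{e_1,\dots,e_m\}$, each $D_j\subseteq U$ is the dependency set $D(e_j)$, and $\varphi$ is a CNF with $\mathit{var}(\varphi)\subseteq U\cup E$. A model of $\Phi$ is a family $F=(f_e)_{e\in E}$ of functions $f_e:[D(e)]\to\{\textsc{true},\textsc{false}\}$ such that for every $\sigma\in[U]$ the assignment $\sigma\cup F(\sigma)$ satisfies $\varphi$, where $F(\sigma)$ assigns each $e\in E$ the value $f_e(\sigma|_{D(e)})$. $\Phi$ is true if it has a model and false otherwise. *)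

(* Defs.v *)
From mathcomp Require Import all_boot.
Set Implicit Arguments. Unset Strict Implicit. Unset Printing Implicit Defensive.

Section DQBF.
Variable V : finType.

(* Assignments [V] are total functions V -> bool; restriction is implicit. *)
Definition assignment := V -> bool.

(* CNF: a literal is (variable, polarity); true polarity = positive literal. *)
Definition literal := (V * bool)%type.
Definition clause := seq literal.
Definition cnf := seq clause.

Definition lit_sat (a : assignment) (l : literal) : bool := a l.1 == l.2.
Definition clause_sat (a : assignment) (c : clause) : bool := has (lit_sat a) c.
Definition cnf_sat (a : assignment) (phi : cnf) : bool := all (clause_sat a) phi.

Definition cnf_vars (phi : cnf) : seq V := [seq l.1 | l <- flatten phi].

Definition wf_dqbf (U E : {set V}) (D : V -> {set V}) (phi : cnf) : Prop :=
  [disjoint U & E] /\ (forall e, e \in E -> D e \subset U) /\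
  (forall x, x \in cnf_vars phi -> x \in U :|: E).

(* F(σ) extended: σ ∪ F(σ). Values of σ outside U are never read, since
   var(phi) ⊆ U ∪ E and each f e depends only on D e ⊆ U. *)
Definition extend (E : {set V}) (f : V -> assignment -> bool) (s : assignment)
  : assignment := fun x => if x \in E then f x s else s x.

(* A model: f e : [D(e)] -> bool, i.e. a function of σ depending only on σ|_{D e}. *)
Definition is_model (U E : {set V}) (D : V -> {set V}) (phi : cnf)
  (f : V -> assignment -> bool) : Prop :=
  (forall e, e \in E -> forall s s' : assignment,
      (forall u, u \in D e -> s u = s' u) -> f e s = f e s') /\
  (forall s : assignment, cnf_sat (extend E f s) phi).

Definition dqbf_true (U E : {set V}) (D : V -> {set V}) (phi : cnf) : Prop :=
  exists f, is_model U E D phi f.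

Inductive form : Type :=
| FVar : V -> form
| FTrue : form
| FFalse : form
| FNot : form -> form
| FAnd : form -> form -> form
| FOr : form -> form -> form.

Fixpoint form_eval (a : assignment) (p : form) : bool :=
  match p with
  | FVar x => a x
  | FTrue => true
  | FFalse => false
  | FNot q => ~~ form_eval a q
  | FAnd q r => form_eval a q && form_eval a r
  | FOr q r => form_eval a q || form_eval a r
  end.

Fixpoint form_vars (p : form) : seq V :=
  match p with
  | FVar x => [:: x]
  | FTrue | FFalse => [::]
  | FNot q => form_vars q
  | FAnd q r | FOr q r => form_vars q ++ form_vars r
  end.

Definition linear_order_on (E : {set V}) (lt : rel V) : Prop :=
  (forall x, x \in E -> ~~ lt x x) /\
  (forall x y z, x \in E -> y \in E -> z \in E -> lt x y -> lt y z -> lt x z) /\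
  (forall x y, x \in E -> y \in E -> x != y -> lt x y || lt y x).

End DQBF.

(* Main.v *)
Require Import Defs.
From mathcomp Require Import all_boot.

Section Aux.
Set Implicit Arguments.
Variable V : finType.

Definition bigOr (l : seq (form V)) := foldr (@FOr V) (@FFalse V) l.
Definition bigAnd (l : seq (form V)) := foldr (@FAnd V) (@FTrue V) l.

Lemma eval_bigOr a l : form_eval a (bigOr l) = has (form_eval a) l.
Proof. by elim: l => //= p l ->. Qed.
Lemma eval_bigAnd a l : form_eval a (bigAnd l) = all (form_eval a) l.
Proof. by elim: l => //= p l ->. Qed.
Lemma vars_bigOr x l : x \in form_vars (bigOr l) -> has (fun p => x \in form_vars p) l.
Proof. by elim: l => //= p l IH; rewrite mem_cat => /orP [->|/IH ->] //; rewrite orbT. Qed.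
Lemma vars_bigAnd x l : x \in form_vars (bigAnd l) -> has (fun p => x \in form_vars p) l.
Proof. by elim: l => //= p l IH; rewrite mem_cat => /orP [->|/IH ->] //; rewrite orbT. Qed.

Definition flit (u : V) (b : bool) : form V := if b then FVar u else FNot (FVar u).

Lemma eval_flit a u b : form_eval a (flit u b) = (a u == b).
Proof. by case: b => /=; case: (a u). Qed.

Definition dnf (S : {set V}) (g : assignment V -> bool) : form V :=
  bigOr [seq bigAnd [seq flit u (b u) | u <- enum S] | b : {ffun V -> bool} <- enum {ffun V -> bool} & g b].

Lemma dnf_vars S g x : x \in form_vars (dnf S g) -> x \in S.
Proof.
move/vars_bigOr; rewrite has_map => /hasP [b _] /vars_bigAnd; rewrite has_map => /hasP [u Hu].
rewrite /preim /= /flit; case: ifP => _ /=; rewrite inE => /eqP ->; by rewrite -mem_enum.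
Qed.

Lemma dnf_eval (S : {set V}) (g : assignment V -> bool) (a : assignment V) :
  (forall s s' : assignment V, (forall u, u \in S -> s u = s' u) -> g s = g s') ->
  form_eval a (dnf S g) = g a.
Proof.
move=> Hg; rewrite eval_bigOr has_map; case Ha: (g a).
  apply/hasP; exists [ffun x => a x].
    rewrite mem_filter mem_enum andbT (Hg _ a) // => u _; by rewrite ffunE.
  rewrite /preim /= eval_bigAnd all_map; apply/allP => u _ /=.
  by rewrite eval_flit ffunE.
apply/hasP => [[b Hb]]; rewrite /preim /=; rewrite eval_bigAnd all_map => /allP Hall.
move: Hb; rewrite mem_filter => /andP [Hgb _].
have : g a = g b.
  apply: Hg => u Hu; have := Hall u; rewrite mem_enum /= eval_flit => /(_ Hu) /eqP //.
by rewrite Ha Hgb.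
Qed.

Variables (E : {set V}) (psi : V -> form V).

Fixpoint iter_a (s : assignment V) (k : nat) : assignment V :=
  match k with
  | 0 => fun x => if x \in E then false else s x
  | k.+1 => fun x => if x \in E then form_eval (iter_a s k) (psi x) else s x
  end.

Lemma iter_nonE s k x : x \notin E -> iter_a s k x = s x.
Proof. by case: k => [|k] /= /negbTE ->. Qed.

Lemma eval_ext (a b : assignment V) p :
  (forall x, x \in form_vars p -> a x = b x) -> form_eval a p = form_eval b p.
Proof.
elim: p => [x||| q IH | q IHq r IHr | q IHq r IHr] //= H.
- by apply: H; rewrite inE.
- by rewrite IH.
- by rewrite IHq ?IHr // => x Hx; apply: H; rewrite mem_cat Hx ?orbT.
- by rewrite IHq ?IHr // => x Hx; apply: H; rewrite mem_cat Hx ?orbT.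
Qed.

Lemma cnf_sat_ext (a b : assignment V) phi : a =1 b -> cnf_sat a phi = cnf_sat b phi.
Proof.
move=> H; apply: eq_all => c; apply: eq_has => l; by rewrite /lit_sat H.
Qed.

End Aux.

Theorem lemma3 (V : finType) (U E : {set V}) (D : V -> {set V}) (phi : cnf V)
    (ltE : rel V) :
  wf_dqbf U E D phi ->
  linear_order_on E ltE ->
  dqbf_true U E D phi <->
  exists psi : V -> form V,
    (forall e, e \in E -> forall x, x \in form_vars (psi e) ->
        x \in D e \/ [/\ x \in E, D x \subset D e & ltE x e]) /\
    (* ¬φ ∧ ⋀_{e∈E} (e ↔ ψ_e) is unsatisfiable *)
    ~ (exists a : assignment V,
         ~~ cnf_sat a phi /\ (forall e, e \in E -> a e = form_eval a (psi e))).
Proof.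
move=> [dUE [DU _]] [irr [trans _]]; split.
  move=> [f [Hdep Hsat]].
  exists (fun e => dnf (D e) (f e)); split.
    by move=> e _ x /dnf_vars; left.
  move=> [a [Hna Ha]]; move/negP: Hna; apply.
  rewrite (@cnf_sat_ext _ a (extend E f a)) // => x.
  rewrite /extend; case: ifP => // xE.
  by rewrite Ha // dnf_eval // => s s' H; apply: Hdep.
move=> [psi [Hv Hun]].
have DnE : forall e x, e \in E -> x \in D e -> x \notin E.
  move=> e x eE xD; have xU : x \in U by apply: (subsetP (DU e eE)).
  by rewrite (disjointFr dUE xU).
have Hdep : forall k e, e \in E -> forall s s' : assignment V,
    (forall u, u \in D e -> s u = s' u) -> iter_a E psi s k e = iter_a E psi s' k e.
  elim=> [|k IH] e eE s s' H /=; rewrite eE //.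
  apply: eval_ext => x /(Hv e eE) [xD|[xE sub _]].
    by rewrite !iter_nonE ?H ?(DnE e).
  by apply: IH => // u uD; apply: H; apply: (subsetP sub).
pose rk x := #|[set y in E | ltE y x]|.
have rklt : forall x e, x \in E -> e \in E -> ltE x e -> rk x < rk e.
  move=> x e xE eE lxe; apply: proper_card; apply/properP; split.
    apply/subsetP => y; rewrite !inE => /andP [yE lyx].
    by rewrite yE (trans y x e).
  by exists x; rewrite !inE ?xE ?lxe // (negbTE (irr x xE)).
have Hstab : forall s k e, e \in E -> rk e < k ->
    iter_a E psi s k e = iter_a E psi s k.+1 e.
  move=> s; elim=> [|k IH] e eE //= Hrk; rewrite eE.
  apply: eval_ext => x Hx; change (iter_a E psi s k x = iter_a E psi s k.+1 x).
  move: Hx => /(Hv e eE) [xD|[xE sub lxe]].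
    by rewrite !iter_nonE ?(DnE e x).
  apply: IH => //; have := rklt x e xE eE lxe; move: Hrk; rewrite ltnS.
  move=> h1 h2; exact: leq_trans h2 h1.
exists (fun e s => iter_a E psi s #|V|.+1 e); split.
  by move=> e eE s s' H; apply: Hdep.
move=> s; apply/negPn/negP => Hn; apply: Hun.
exists (iter_a E psi s #|V|.+1); split.
  move: Hn; congr (~~ _); apply: cnf_sat_ext => x.
  by rewrite /extend; case: ifP => // /negbT xE; rewrite iter_nonE.
move=> e eE; rewrite Hstab //= ?eE //.
by rewrite ltnS max_card.
Qed.
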